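(* For each $\lambda\in\Lambda$, $(Q_\lambda,B)$ is a polynomial-like map of degree $p+1$: $Q_\lambda(B)$ is a ball strictly containing $B$, and for every $w\in Q_\lambda(B)$ the equation $Q_\lambda(z)=w$ has exactly $p+1$ solutions in $B$, counted with multiplicity.
   Context: Let $p$ be a prime, $\mathbb C_p$ with $p$-adic absolute value, $|p|=1/p$. $\Lambda=\{\lambda\in\mathbb C_p:|\lambda-1|<1\}$, $P_\lambda(z)=\frac{\lambda}{p}z^p+\left(1-\frac{\lambda}{p}\right)z^{p+1}$, $\rho=p^{-1/(p-1)}$. Fix $\hat r\in|\mathbb C_p^*|$, $\hat r>1$, $B=\{z:|z|\le\hat r\}$; $\mathcal H(B)$ is the ring of power series $\sum a_iz^i$ convergent on $B$ with norm $\|f\|_B=\sup_i|a_i|\hat r^{\,i}$. Fix $Q\in\mathcal H(B)$ with $\|Q\|_B<\rho$, $Q^*_\lambda=P_\lambda+Q$, and let $h(\lambda)$ be the unique fixed point of $Q^*_\lambda$ in $\{z:|z-1|\le|Q(1)|/p\}$. Define $Q_\lambda(z)=P_\lambda(z+h(\lambda)-1)+Q(z+h(\lambda)-1)+1-h(\lambda)$ for $z\in B$. *)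

(* Defs.v *)
(* K is an abstract algebraically closed field (closedFieldType)
   with an absolute value into a realType R; hypotheses [is_Cp] pin K down as C_p. *)
From HB Require Import structures.
From mathcomp Require Import all_boot all_order all_algebra.
From mathcomp Require Import reals exp.
From Stdlib Require Import ClassicalEpsilon.
Set Implicit Arguments. Unset Strict Implicit. Unset Printing Implicit Defensive.
Import Order.TTheory GRing.Theory Num.Theory.
Local Open Scope ring_scope.

Section Padic.
Variables (R : realType) (K : closedFieldType) (abs : K -> R).

Definition algebraic_over_Q (y : K) : Prop :=
  exists q : {poly int}, q != 0 /\ root (map_poly (fun z : int => z%:~R) q) y.

(* (K, abs) is (a copy of) C_p: a complete, algebraically closed, non-archimedean
   valued field with |p| = 1/p in which the algebraic numbers are dense
   (i.e. the completion of an algebraic closure of Q_p). *)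
Definition is_Cp (p : nat) : Prop :=
  (forall x, 0 <= abs x) /\
      (forall x, abs x = 0 <-> x = 0) /\
      (forall x y, abs (x * y) = abs x * abs y) /\
      (forall x y, abs (x + y) <= Num.max (abs x) (abs y)) /\
      abs (p%:R) = (p%:R)^-1 /\
      (forall u : nat -> K,
         (forall eps, 0 < eps -> exists N, forall m n, (N <= m)%N -> (N <= n)%N ->
            abs (u m - u n) < eps) ->
         exists l, forall eps, 0 < eps -> exists N, forall n, (N <= n)%N -> abs (u n - l) < eps) /\
      (forall x eps, 0 < eps -> exists y, algebraic_over_Q y /\ abs (x - y) < eps).

Definition series_to (u : nat -> K) (s : K) : Prop :=
  forall eps, 0 < eps -> exists N, forall n, (N <= n)%N ->
    abs (\sum_(i < n) u i - s) < eps.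

Definition pseval (a : nat -> K) (z : K) : K :=
  epsilon (inhabits 0) (fun s => series_to (fun i => a i * z ^+ i) s).

(* a belongs to H(B), B = closed ball of radius r: |a_i| r^i -> 0 *)
Definition in_H (r : R) (a : nat -> K) : Prop :=
  forall eps, 0 < eps -> exists N, forall i, (N <= i)%N -> abs (a i) * r ^+ i < eps.

Definition rho (p : nat) : R := powR (p%:R) (- (p%:R - 1)^-1).

Definition Plam (p : nat) (lam z : K) : K :=
  lam / p%:R * z ^+ p + (1 - lam / p%:R) * z ^+ p.+1.

Definition Qstar (p : nat) (Q : nat -> K) (lam z : K) : K :=
  Plam p lam z + pseval Q z.

Definition Qlam (p : nat) (Q : nat -> K) (lam h z : K) : K :=
  Plam p lam (z + h - 1) + pseval Q (z + h - 1) + 1 - h.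

Definition mult_at (f : K -> K) (z0 : K) (m : nat) : Prop :=
  exists L, L != 0 /\ forall eps, 0 < eps -> exists del, 0 < del /\
    forall z, z != z0 -> abs (z - z0) < del -> abs (f z / (z - z0) ^+ m - L) < eps.

End Padic.

(* Main.v *)
Require Import Defs.
From HB Require Import structures.
From mathcomp Require Import all_boot all_order all_algebra.
From mathcomp Require Import reals exp.
From Stdlib Require Import ClassicalEpsilon.
From mathcomp Require Import ring lra.
Set Implicit Arguments. Unset Strict Implicit. Unset Printing Implicit Defensive.
Import Order.TTheory GRing.Theory Num.Theory.
Local Open Scope ring_scope.

Section Ultra.
Variables (R : realType) (K : closedFieldType) (abs : K -> R).
Hypothesis abs_ge0 : forall x, 0 <= abs x.
Hypothesis abs0P : forall x, abs x = 0 <-> x = 0.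
Hypothesis absM : forall x y, abs (x * y) = abs x * abs y.
Hypothesis absD : forall x y, abs (x + y) <= Num.max (abs x) (abs y).

Lemma abs0 : abs 0 = 0. Proof. by apply/abs0P. Qed.

Lemma abs_neq0 x : x != 0 -> 0 < abs x.
Proof.
move=> nx; rewrite lt_neqAle abs_ge0 andbT eq_sym; apply/eqP => /abs0P.
by apply/eqP.
Qed.

Lemma abs1 : abs 1 = 1.
Proof.
have h := absM 1 1; rewrite mulr1 in h.
have hp : 0 < abs 1 by apply: abs_neq0; exact: oner_neq0.
have : abs 1 * (abs 1 - 1) = 0 by rewrite mulrBr mulr1 -h subrr.
move/eqP; rewrite mulf_eq0 subr_eq0 (gt_eqF hp) /=; by move/eqP.
Qed.

Lemma absN1 : abs (-1) = 1.
Proof.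
have h := absM (-1) (-1); rewrite mulrNN mulr1 abs1 in h.
have hp := abs_ge0 (-1).
have : (abs (-1) - 1) * (abs (-1) + 1) = 0 by rewrite -subr_sqr expr2 -h expr1n subrr.
move/eqP; rewrite mulf_eq0 subr_eq0 => /orP [/eqP //|].
rewrite addr_eq0 => /eqP e; move: hp; by rewrite e oppr_ge0 ler10.
Qed.

Lemma absN x : abs (- x) = abs x.
Proof. by rewrite -mulN1r absM absN1 mul1r. Qed.

Lemma absX x n : abs (x ^+ n) = abs x ^+ n.
Proof. elim: n => [|n IH]; first by rewrite !expr0 abs1. by rewrite !exprS absM IH. Qed.

Lemma absV x : abs (x^-1) = (abs x)^-1.
Proof.
have [->|nx] := eqVneq x 0; first by rewrite invr0 abs0 invr0.
have h := absM x x^-1; rewrite mulfV // abs1 in h.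
have hp := abs_neq0 nx.
have hn : abs x != 0 by rewrite gt_eqF.
by rewrite -[abs x^-1]mul1r -(mulVf hn) -mulrA -h mulr1.
Qed.

Lemma absDM x y M : abs x <= M -> abs y <= M -> abs (x + y) <= M.
Proof. move=> hx hy; apply: le_trans (absD x y) _; by rewrite ge_max hx hy. Qed.

Lemma absDL x y M : abs x < M -> abs y < M -> abs (x + y) < M.
Proof. move=> hx hy; apply: le_lt_trans (absD x y) _; by rewrite gt_max hx hy. Qed.

Lemma absBM x y M : abs x <= M -> abs y <= M -> abs (x - y) <= M.
Proof. by move=> hx hy; apply: absDM => //; rewrite absN. Qed.

Lemma absBL x y M : abs x < M -> abs y < M -> abs (x - y) < M.
Proof. by move=> hx hy; apply: absDL => //; rewrite absN. Qed.

Lemma abs_strict x y : abs y < abs x -> abs (x + y) = abs x.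
Proof.
move=> hyx; apply/eqP; rewrite eq_le; apply/andP; split.
  by apply: absDM => //; apply: ltW.
have e : x = (x + y) - y by rewrite addrK.
rewrite leNgt; apply/negP => hlt.
have : abs x < abs x by rewrite {1}e; apply: absBL.
by rewrite ltxx.
Qed.

Lemma abs_nat n : abs (n%:R) <= 1.
Proof.
elim: n => [|n IH]; first by rewrite abs0 ler01.
by rewrite -natr1; apply: absDM => //; rewrite abs1.
Qed.

Lemma abs_sum_le (I : Type) (s : seq I) (P : pred I) (F : I -> K) M :
  0 <= M -> (forall i, P i -> abs (F i) <= M) -> abs (\sum_(i <- s | P i) F i) <= M.
Proof.
move=> M0 h; elim/big_rec: _ => [|i x Pi hx]; first by rewrite abs0.
by apply: absDM => //; apply: h.
Qed.

Lemma abs_sum_lt (I : Type) (s : seq I) (P : pred I) (F : I -> K) M :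
  0 < M -> (forall i, P i -> abs (F i) < M) -> abs (\sum_(i <- s | P i) F i) < M.
Proof.
move=> M0 h; elim/big_rec: _ => [|i x Pi hx]; first by rewrite abs0.
by apply: absDL => //; apply: h.
Qed.

Lemma abs_sum_dom n (F : nat -> K) j :
  (j < n)%N -> 0 < abs (F j) -> (forall i, (i < n)%N -> i != j -> abs (F i) < abs (F j)) ->
  abs (\sum_(i < n) F i) = abs (F j).
Proof.
move=> jn Fp h; rewrite (bigD1 (Ordinal jn)) //= abs_strict //.
apply: abs_sum_lt => // i /negP ni; apply: h => //; apply/negP => /eqP e; apply: ni; apply/eqP/val_inj.
exact: e.
Qed.


Definition to0 (u : nat -> K) := forall eps, 0 < eps -> exists N, forall i, (N <= i)%N -> abs (u i) < eps.

Lemma abs_small x : (forall eps, 0 < eps -> abs x < eps) -> x = 0.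
Proof.
move=> h; apply/eqP/negPn/negP => nx; have := h _ (abs_neq0 nx); by rewrite ltxx.
Qed.

Lemma psumB (u : nat -> K) n m : (n <= m)%N ->
  \sum_(i < m) u i - \sum_(i < n) u i = \sum_(n <= i < m) u i.
Proof.
move=> nm; rewrite -!(big_mkord xpredT) (@big_cat_nat _ _ _ n 0 m _ _ (leq0n n) nm) /=.
by apply/eqP; rewrite subr_eq addrC.
Qed.

Lemma psumB_le (u : nat -> K) n m M : (n <= m)%N -> 0 <= M ->
  (forall i, (n <= i)%N -> abs (u i) <= M) ->
  abs (\sum_(i < m) u i - \sum_(i < n) u i) <= M.
Proof.
move=> nm M0 h; rewrite psumB // big_nat_cond; apply: abs_sum_le => // i /andP [/andP [ni _] _]; exact: h.
Qed.

Lemma psumB_lt (u : nat -> K) n m M : (n <= m)%N -> 0 < M ->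
  (forall i, (n <= i)%N -> abs (u i) < M) ->
  abs (\sum_(i < m) u i - \sum_(i < n) u i) < M.
Proof.
move=> nm M0 h; rewrite psumB // big_nat_cond; apply: abs_sum_lt => // i /andP [/andP [ni _] _]; exact: h.
Qed.

Lemma lim_le (v : nat -> K) s a k M : 0 <= M ->
  (forall n, (k <= n)%N -> abs (v n - a) <= M) ->
  (forall eps, 0 < eps -> exists N, forall n, (N <= n)%N -> abs (v n - s) < eps) ->
  abs (s - a) <= M.
Proof.
move=> M0 hb hc; rewrite leNgt; apply/negP => hlt.
have ep : 0 < abs (s - a) - M by rewrite subr_gt0.
have [N hN] := hc _ ep.
have h1 := hN (maxn N k) (leq_maxl _ _).
have h2 := hb (maxn N k) (leq_maxr _ _).
have e : s - a = - (v (maxn N k) - s) + (v (maxn N k) - a).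
  by rewrite opprB addrA subrK.
have : abs (s - a) < abs (s - a).
  rewrite {1}e; apply: absDL; rewrite ?absN.
    apply: lt_le_trans h1 _; rewrite lerBlDr lerDl //.
  exact: le_lt_trans h2 hlt.
by rewrite ltxx.
Qed.

Hypothesis complete : forall u : nat -> K,
  (forall eps, 0 < eps -> exists N, forall m n, (N <= m)%N -> (N <= n)%N ->
     abs (u m - u n) < eps) ->
  exists l, forall eps, 0 < eps -> exists N, forall n, (N <= n)%N -> abs (u n - l) < eps.

Lemma series_ex u : to0 u -> exists s, series_to abs u s.
Proof.
move=> h; apply: complete => eps ep; have [N hN] := h _ ep; exists N => m n hm hn.
have [nm|mn] := leqP n m.
  apply: psumB_lt => // i ni; apply: hN; exact: leq_trans hn ni.
rewrite -absN opprB; apply: psumB_lt => //; first exact: ltnW.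
move=> i ni; apply: hN; exact: leq_trans hm ni.
Qed.

Lemma series_uniq u s t : series_to abs u s -> series_to abs u t -> s = t.
Proof.
move=> hs ht; apply/eqP; rewrite -subr_eq0; apply/eqP/abs_small => eps ep.
have [N1 h1] := hs _ ep; have [N2 h2] := ht _ ep.
have e : s - t = - (\sum_(i < maxn N1 N2) u i - s) + (\sum_(i < maxn N1 N2) u i - t).
  by rewrite opprB addrA subrK.
rewrite e; apply: absDL; rewrite ?absN; [apply: h1 | apply: h2].
  exact: leq_maxl. exact: leq_maxr.
Qed.

Lemma pseval_eq a z s : series_to abs (fun i => a i * z ^+ i) s -> pseval abs a z = s.
Proof.
move=> h; apply: (series_uniq _ h); rewrite /pseval.
by apply: (epsilon_spec (inhabits 0) (fun s => series_to abs _ s)); exists s.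
Qed.

Lemma series_add u v s t : series_to abs u s -> series_to abs v t ->
  series_to abs (fun i => u i + v i) (s + t).
Proof.
move=> hs ht eps ep; have [N1 h1] := hs _ ep; have [N2 h2] := ht _ ep.
exists (maxn N1 N2) => n hn; rewrite big_split /=.
have -> : \sum_(i < n) u i + \sum_(i < n) v i - (s + t) =
  (\sum_(i < n) u i - s) + (\sum_(i < n) v i - t) by rewrite opprD addrACA.
apply: absDL; [apply: h1 | apply: h2]; apply: leq_trans hn.
  exact: leq_maxl. exact: leq_maxr.
Qed.

Lemma series_scale c u s : series_to abs u s -> series_to abs (fun i => c * u i) (c * s).
Proof.
move=> hs eps ep.
have cp : 0 < abs c + 1 by apply: ltr_wpDl.
have [N hN] := hs (eps / (abs c + 1)) (divr_gt0 ep cp).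
exists N => n hn; rewrite -mulr_sumr -mulrBr absM.
apply: (@le_lt_trans _ _ ((abs c + 1) * abs (\sum_(i < n) u i - s))).
  by apply: ler_wpM2r => //; rewrite lerDl.
rewrite -ltr_pdivlMl // mulrC; exact: hN.
Qed.

Lemma series_fin u n0 : (forall i, (n0 <= i)%N -> u i = 0) ->
  series_to abs u (\sum_(i < n0) u i).
Proof.
move=> h eps ep; exists n0 => n hn.
rewrite psumB // big_nat_cond big1 ?abs0 // => i /andP [/andP [ni _] _]; exact: h.
Qed.

Lemma series_tail u s k M : series_to abs u s -> 0 <= M ->
  (forall i, (k <= i)%N -> abs (u i) <= M) -> abs (s - \sum_(i < k) u i) <= M.
Proof.
move=> hs M0 h; apply: (@lim_le (fun n => \sum_(i < n) u i) _ _ k) => //.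
move=> n kn; exact: psumB_le.
Qed.

Lemma series_bound u s M : series_to abs u s -> 0 <= M ->
  (forall i, abs (u i) <= M) -> abs s <= M.
Proof.
move=> hs M0 h; have := @series_tail u s 0 M hs M0 (fun i _ => h i).
by rewrite big_ord0 subr0.
Qed.


Definition dd (d : nat) (G : {poly K}) :=
  [/\ forall i, abs G`_i <= 1, abs G`_d = 1 & forall i, (d < i)%N -> abs G`_i < 1].

Lemma abs_mul_lt1 x y : abs x < 1 -> abs y <= 1 -> abs (x * y) < 1.
Proof. move=> hx hy; rewrite absM; apply: le_lt_trans hx; by rewrite ler_piMr. Qed.

Lemma abs_mul_le1 x y : abs x <= 1 -> abs y <= 1 -> abs (x * y) <= 1.
Proof. move=> hx hy; rewrite absM; apply: le_trans hx; by rewrite ler_piMr. Qed.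

Lemma dd_mul d1 d2 G1 G2 : dd d1 G1 -> dd d2 G2 -> dd (d1 + d2) (G1 * G2).
Proof.
case=> a1 b1 c1 [a2 b2 c2]; split.
- move=> k; rewrite coefM; apply: abs_sum_le => // j _; exact: abs_mul_le1.
- have e1 : abs (G1`_d1 * G2`_(d1 + d2 - d1)) = 1 by rewrite addKn absM b1 b2 mulr1.
  rewrite coefM (@abs_sum_dom _ (fun j => G1`_j * G2`_(d1 + d2 - j)) d1) //=.
  + by rewrite ltnS leq_addr.
  + by rewrite e1 ltr01.
  move=> j jl jn; rewrite e1.
  have [jd|dj] := ltnP d1 j.
    by apply: abs_mul_lt1; [apply: c1 | apply: a2].
  rewrite mulrC; apply: abs_mul_lt1; last exact: a1.
  apply: c2; rewrite ltn_subRL ltn_add2r ltn_neqAle dj andbT; exact: jn.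
- move=> k hk; rewrite coefM; apply: abs_sum_lt => // j _.
  have [jd|dj] := ltnP d1 j.
    by apply: abs_mul_lt1; [apply: c1 | apply: a2].
  rewrite mulrC; apply: abs_mul_lt1; last exact: a1.
  apply: c2; rewrite ltn_subRL; apply: leq_ltn_trans hk; by rewrite leq_add2r.
Qed.

Lemma dd1 : dd 0 1.
Proof.
split=> [i||i]; rewrite coef1 ?abs1 //.
  by case: (i == 0%N); rewrite ?abs1 ?abs0 ?ler01.
by case: i => // i _; rewrite abs0 ltr01.
Qed.

Lemma dd_XsubC r : abs r <= 1 -> dd 1 ('X - r%:P).
Proof.
move=> hr; split=> [i||i].
- rewrite coefB coefX coefC; case: i => [|[|i]] /=; rewrite ?subr0 ?sub0r ?absN ?abs1 ?abs0 ?ler01 //.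
- by rewrite coefB coefX coefC /= subr0 abs1.
- by case: i => [|[|i]] //= _; rewrite coefB coefX coefC /= ?subr0 ?abs0 ?ltr01.
Qed.

Lemma dd_1subX r : 1 < abs r -> dd 0 (1 - r^-1 *: 'X).
Proof.
move=> hr.
have hv : abs (r^-1) < 1 by rewrite absV invf_lt1 // (lt_trans ltr01 hr).
split=> [i||i].
- rewrite coefB coef1 coefZ coefX; case: i => [|[|i]] /=.
  + by rewrite mulr0 subr0 abs1.
  + by rewrite mulr1 sub0r absN ltW.
  + by rewrite mulr0 subr0 abs0 ler01.
- by rewrite coefB coef1 coefZ coefX /= mulr0 subr0 abs1.
- case: i => [|[|i]] //= _; rewrite coefB coef1 coefZ coefX /=.
    by rewrite mulr1 sub0r absN.
  by rewrite mulr0 subr0 abs0 ltr01.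
Qed.

Lemma dd_prod (s : seq K) (F : K -> {poly K}) (d : K -> nat) :
  (forall r, r \in s -> dd (d r) (F r)) -> dd (\sum_(r <- s) d r)%N (\prod_(r <- s) F r).
Proof.
elim: s => [|a s IH] h; first by rewrite !big_nil; exact: dd1.
rewrite !big_cons; apply: dd_mul; first by apply: h; rewrite mem_head.
by apply: IH => r rs; apply: h; rewrite in_cons rs orbT.
Qed.

Lemma abs_prod (I : Type) (s : seq I) (P : pred I) (F : I -> K) :
  abs (\prod_(i <- s | P i) F i) = \prod_(i <- s | P i) abs (F i).
Proof.
elim: s => [|a s IH]; first by rewrite !big_nil abs1.
rewrite !big_cons; case: (P a) => //; by rewrite absM IH.
Qed.

Lemma poly_roots (P : {poly K}) N :
  (forall i, abs P`_i <= 1) -> abs P`_N = 1 -> (forall i, (N < i)%N -> abs P`_i < 1) ->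
  exists A : seq K, [/\ size A = N, (forall r, r \in A -> abs r <= 1) &
    forall w, abs w <= 1 -> abs P.[w] = \prod_(r <- A) abs (w - r)].
Proof.
move=> ha hb hc; have [rs Hrs] := closed_field_poly_normal P.
pose a := fun r : K => abs r <= 1.
pose A := [seq r <- rs | a r]; pose B := [seq r <- rs | ~~ a r].
have eB : \prod_(r <- B) ('X - r%:P) = (\prod_(r <- B) (- r)) *: \prod_(r <- B) (1 - r^-1 *: 'X).
  rewrite -scaler_prod; apply: eq_big_seq => r; rewrite mem_filter => /andP [nr _].
  have rn : r != 0 by apply/eqP => r0; move: nr; rewrite /a r0 abs0 ler01.
  rewrite scalerBr scalerA mulNr mulfV // scaleN1r opprK addrC -polyCN; congr (_ + _); by rewrite -alg_polyC.
pose G := \prod_(r <- A) ('X - r%:P) * \prod_(r <- B) (1 - r^-1 *: 'X).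
pose c := lead_coef P * \prod_(r <- B) (- r).
have eP : P = c *: G.
  rewrite {1}Hrs (bigID a) /=.
  rewrite (_ : \prod_(i <- rs | a i) _ = \prod_(r <- A) ('X - r%:P)); last by rewrite big_filter.
  rewrite (_ : \prod_(i <- rs | ~~ a i) _ = \prod_(r <- B) ('X - r%:P)); last by rewrite big_filter.
  by rewrite eB scalerAr scalerA -scalerAr.
have hG : dd (size A) G.
  have -> : size A = (\sum_(r <- A) 1 + \sum_(r <- B) 0)%N by rewrite sum1_size big1 ?addn0.
  apply: dd_mul; apply: dd_prod => r; rewrite mem_filter => /andP [hr _].
    exact: dd_XsubC.
  by apply: dd_1subX; rewrite ltNge.
case: hG => ga gb gc.
have cE i : abs P`_i = abs c * abs G`_i by rewrite eP coefZ absM.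
have c1 : abs c = 1.
  apply/eqP; rewrite eq_le; apply/andP; split.
    by have := ha (size A); rewrite cE gb mulr1.
  have := hb; rewrite cE => e; rewrite -e -{2}[abs c]mulr1; apply: ler_wpM2l => //; exact: ga.
have sA : size A = N.
  have [h|h|//] := ltngtP (size A) N.
  - by have := gc _ h; have := cE N; rewrite hb c1 mul1r => <-; rewrite ltxx.
  - by have := hc _ h; rewrite cE c1 mul1r gb ltxx.
exists A; split=> //.
  by move=> r; rewrite mem_filter => /andP [].
move=> w hw; rewrite eP hornerZ absM c1 mul1r hornerM !horner_prod absM !abs_prod.
rewrite [X in _ * X](@eq_big_seq _ _ _ _ _ _ (fun _ => 1)); last first.
  move=> r; rewrite mem_filter => /andP [nr _].
  rewrite hornerD hornerN hornerC hornerZ hornerX.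
  rewrite abs_strict abs1 //= absN absM absV; rewrite /a -ltNge in nr.
  rewrite mulrC ltr_pdivrMr ?mul1r; first exact: le_lt_trans hw nr.
  exact: lt_trans ltr01 nr.
rewrite big1_eq mulr1; apply: eq_bigr => r _; by rewrite hornerXsubC.
Qed.


Definition nd (N : nat) (b : nat -> K) :=
  [/\ abs (b N) = 1, (forall i, (i < N)%N -> abs (b i) <= 1),
      (exists d, [/\ 0 <= d, d < 1 & forall i, (N < i)%N -> abs (b i) <= d]) & to0 b].

Lemma nd_le1 N b : nd N b -> forall i, abs (b i) <= 1.
Proof.
case=> h1 h2 [d [d0 d1 h3]] _ i; have [iN|iN|->] := ltngtP i N.
- exact: h2.
- exact: le_trans (h3 _ iN) (ltW d1).
- by rewrite h1.
Qed.

Lemma to0_mul b t : to0 b -> abs t <= 1 -> to0 (fun i => b i * t ^+ i).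
Proof.
move=> h ht eps ep; have [N hN] := h _ ep; exists N => i Ni.
apply: le_lt_trans (hN _ Ni); rewrite absM absX; apply: ler_piMr => //.
by apply: exprn_ile1.
Qed.

Lemma series_D b t : to0 b -> abs t <= 1 ->
  series_to abs (fun i => b i * t ^+ i) (pseval abs b t).
Proof.
move=> h ht; have [s hs] := series_ex (to0_mul h ht); by rewrite (pseval_eq hs).
Qed.

Lemma pow_lip t s i : abs t <= 1 -> abs s <= 1 -> abs (t ^+ i - s ^+ i) <= abs (t - s).
Proof.
move=> ht hs; rewrite subrXX absM -{2}[abs (t - s)]mulr1; apply: ler_wpM2l => //.
apply: abs_sum_le => // j _; rewrite absM !absX.
by rewrite mulr_ile1 ?exprn_ge0 ?exprn_ile1.
Qed.

Lemma ev_lip b t s : (forall i, abs (b i) <= 1) -> to0 b -> abs t <= 1 -> abs s <= 1 ->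
  abs (pseval abs b t - pseval abs b s) <= abs (t - s).
Proof.
move=> hb h ht hs.
have := series_add (series_D h ht) (series_scale (-1) (series_D h hs)).
rewrite mulN1r => hser; apply: (series_bound hser) => // i.
rewrite mulN1r -mulrBr absM; apply: le_trans (pow_lip _ ht hs); apply: ler_piMl => //.
Qed.

Lemma ev_le1 b t : (forall i, abs (b i) <= 1) -> to0 b -> abs t <= 1 -> abs (pseval abs b t) <= 1.
Proof.
move=> hb h ht; apply: (series_bound (series_D h ht)) => // i.
by rewrite absM absX mulr_ile1 ?exprn_ge0 ?exprn_ile1.
Qed.

Lemma nd0_abs U t : nd 0 U -> abs t <= 1 -> abs (pseval abs U t) = 1.
Proof.
move=> hU ht; case: (hU) => h1 _ [d [d0 d1 h3]] h4.
have hs := series_D h4 ht.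
have tl := @series_tail _ _ 1 d hs d0.
have e : pseval abs U t = U 0%N + (pseval abs U t - \sum_(i < 1) U i * t ^+ i).
  by rewrite big_ord1 expr0 mulr1 addrC subrK.
rewrite e abs_strict // h1; apply: le_lt_trans d1; apply: tl => i hi.
by rewrite absM absX; apply: le_trans (h3 _ hi); apply: ler_piMr => //; apply: exprn_ile1.
Qed.

Lemma prod_const (s : seq K) (d : R) : \prod_(r <- s) d = d ^+ size s.
Proof. elim: s => [|a s IH]; by rewrite ?big_nil ?big_cons ?IH ?exprS. Qed.

Lemma rec_series b g z t : abs t <= 1 -> abs z <= 1 -> to0 g ->
  (forall k, b k = (if k is k'.+1 then g k' else 0) - z * g k) ->
  pseval abs b t = (t - z) * pseval abs g t.
Proof.
move=> ht hz hg rec.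
have hgs := series_D hg ht.
have key n : (t - z) * \sum_(k < n.+1) g k * t ^+ k =
    \sum_(k < n.+1) b k * t ^+ k + g n * t ^+ n.+1.
  elim: n => [|n IH].
    by rewrite !big_ord1 rec /=; ring.
  rewrite big_ord_recr /= mulrDr IH [in RHS]big_ord_recr /= rec.
  rewrite !exprS; ring.
apply: pseval_eq => eps ep.
have [N1 h1] := hgs _ ep; have [N2 h2] := hg _ ep.
exists (maxn N1 N2).+1 => n hn; case: n hn => [//|n] hn.
have e : \sum_(i < n.+1) b i * t ^+ i - (t - z) * pseval abs g t =
   - (g n * t ^+ n.+1) + (t - z) * (\sum_(k < n.+1) g k * t ^+ k - pseval abs g t).
  by rewrite mulrBr key; ring.
rewrite e; apply: absDL.
  rewrite absN absM absX; apply: le_lt_trans (_ : _ <= abs (g n) * 1) _.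
    by apply: ler_wpM2l => //; apply: exprn_ile1.
  rewrite mulr1; apply: h2; exact: leq_trans (leq_maxr N1 N2) hn.
rewrite absM; apply: le_lt_trans (_ : _ <= 1 * _) _.
  apply: ler_wpM2r => //; apply: absBM => //.
rewrite mul1r; apply: h1; exact: leq_trans (leq_maxl N1 N2) (ltnW hn).
Qed.

Lemma nd_div N b z : nd N.+1 b -> abs z <= 1 -> pseval abs b z = 0 ->
  exists g, nd N g /\ forall t, abs t <= 1 -> pseval abs b t = (t - z) * pseval abs g t.
Proof.
move=> hb hz f0; have b1 := nd_le1 hb.
case: (hb) => h1 h2 [d [d0 d1 h3]] h4.
have hs := series_D h4 hz.
pose g := fun k => if z == 0 then b k.+1
  else - (\sum_(i < k.+1) b i * z ^+ i) / z ^+ k.+1.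
have rec k : b k = (if k is k'.+1 then g k' else 0) - z * g k.
  rewrite /g; case: eqP => [z0|/eqP zn].
    rewrite z0 mul0r subr0; case: k => [|k] //.
    have := f0; rewrite (pseval_eq (series_fin (n0 := 1) _)).
      by rewrite big_ord1 z0 expr0 mulr1.
    by move=> [|i] // _; rewrite z0 expr0n mulr0.
  case: k => [|k]; first by rewrite big_ord1 expr0 mulr1 expr1; field.
  rewrite (big_ord_recr k.+1) /=.
  have zk : z ^+ k.+1 != 0 by rewrite expf_neq0.
  rewrite !exprS; field; rewrite ?mulf_neq0 ?expf_neq0 //.
have gb k M : 0 <= M -> (forall i, (k < i)%N -> abs (b i) <= M) -> abs (g k) <= M.
  move=> M0 hM; rewrite /g; case: eqP => [_|/eqP zn]; first exact: hM.
  have := @series_tail _ _ k.+1 (M * abs z ^+ k.+1) hs.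
  rewrite f0 sub0r absM absN absV absX => h; rewrite ler_pdivrMr ?exprn_gt0 ?abs_neq0 //.
  apply: h; first by rewrite mulr_ge0 ?exprn_ge0.
  move=> i hi; rewrite absM absX; apply: ler_pM => //; first exact: exprn_ge0.
    exact: hM.
  by rewrite -(subnK hi) exprD ler_piMl ?exprn_ge0 ?exprn_ile1.
have gtl : to0 g.
  move=> eps ep; have [K0 hK] := h4 _ (divr_gt0 ep (ltr0Sn _ 1)).
  exists K0 => k kK.
  have hg : abs (g k) <= eps / 2%:R.
    apply: gb; first by rewrite divr_ge0 // ltW.
    by move=> i ki; apply: ltW; apply: hK; apply: leq_trans kK (ltnW ki).
  apply: le_lt_trans hg _.
  by rewrite ltr_pdivrMr ?ltr0Sn // ltr_pMr // ltr1n.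
exists g; split; last by move=> t ht; apply: rec_series.
split => //.
- have e : g N = b N.+1 + z * g N.+1 by rewrite (rec N.+1) /= subrK.
  rewrite e abs_strict ?h1 // absM; apply: le_lt_trans (_ : _ <= 1 * abs (g N.+1)) _.
    by apply: ler_wpM2r.
  rewrite mul1r; apply: le_lt_trans d1; apply: gb => // i hi; apply: h3; exact: ltnW.
- by move=> i _; apply: gb => // j _; apply: b1.
- exists d; split => // i hi; apply: gb => // j hj; apply: h3; exact: leq_ltn_trans hi hj.
Qed.


Lemma argmin_seq (f : K -> R) (s : seq K) : s != [::] ->
  exists2 r, r \in s & forall r', r' \in s -> f r <= f r'.
Proof.
elim: s => [//|a s IH] _; case: (eqVneq s [::]) => [->|sn].
  by exists a; rewrite ?mem_head // => r'; rewrite inE => /eqP ->.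
have [r rs hr] := IH sn; have [ar|ra] := leP (f a) (f r).
  exists a; first exact: mem_head.
  move=> r'; rewrite inE => /orP [/eqP ->//|]; move/hr; exact: le_trans ar.
exists r; first by rewrite inE rs orbT.
move=> r'; rewrite inE => /orP [/eqP ->|]; [exact: ltW | exact: hr].
Qed.

Lemma tele (u : nat -> K) K0 eps : 0 < eps ->
  (forall k, (K0 <= k)%N -> abs (u k.+1 - u k) < eps) ->
  forall n, (K0 <= n)%N -> abs (u n - u K0) < eps.
Proof.
move=> ep h; elim=> [|n IH] hn.
  by move: hn; rewrite leqn0 => /eqP ->; rewrite subrr abs0.
have [e|ne] := eqVneq K0 n.+1; first by rewrite e subrr abs0.
have hn' : (K0 <= n)%N by rewrite -ltnS ltn_neqAle ne hn.
have -> : u n.+1 - u K0 = (u n.+1 - u n) + (u n - u K0) by rewrite addrA subrK.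
apply: absDL; [exact: h | exact: IH].
Qed.

Lemma nd_root N b : nd N b -> (0 < N)%N -> exists z, abs z <= 1 /\ pseval abs b z = 0.
Proof.
move=> hb N0; have b1 := nd_le1 hb; case: hb => h1 h2 [d [d0 d1 h3]] h4.
pose P := fun n => \poly_(i < n) b i.
have Pev n t : (P n).[t] = \sum_(i < n) b i * t ^+ i by rewrite horner_poly.
have PL n : (N < n)%N -> exists A : seq K, [/\ size A = N,
    (forall r, r \in A -> abs r <= 1) &
    forall w, abs w <= 1 -> abs (P n).[w] = \prod_(r <- A) abs (w - r)].
  move=> Nn; apply: poly_roots.
  - by move=> i; rewrite coef_poly; case: ifP; rewrite ?abs0 ?ler01.
  - by rewrite coef_poly Nn.
  - move=> i Ni; rewrite coef_poly; case: ifP; rewrite ?abs0 ?ltr01 // => _.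
    exact: le_lt_trans (h3 _ Ni) d1.
pose Good n r := abs r <= 1 /\ (P n).[r] = 0.
pose St n w r := Good n r /\ forall r', Good n r' -> abs (r - w) <= abs (r' - w).
have goodA n A w : (forall w, abs w <= 1 -> abs (P n).[w] = \prod_(r <- A) abs (w - r)) ->
    (forall r, r \in A -> abs r <= 1) -> Good n w -> w \in A.
  move=> hA _ [hw e]; have := hA _ hw; rewrite e abs0 => /esym/eqP.
  rewrite prodf_seq_eq0 => /hasP [r rA /= /eqP /abs0P]; move/eqP; rewrite subr_eq0 => /eqP ->.
  exact: rA.
have Ag n A r : (forall w, abs w <= 1 -> abs (P n).[w] = \prod_(r <- A) abs (w - r)) ->
    (forall r, r \in A -> abs r <= 1) -> r \in A -> Good n r.
  move=> hA hA1 rA; split; first exact: hA1.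
  apply/abs0P; rewrite hA ?hA1 //; apply/eqP; rewrite prodf_seq_eq0; apply/hasP.
  by exists r => //=; rewrite subrr abs0.
have St_ex n w : (N < n)%N -> exists r, St n w r.
  move=> Nn; have [A [sA hA1 hA]] := PL n Nn.
  have An : A != [::] by apply/eqP => e; move: sA; rewrite e /= => e'; move: N0; rewrite -e'.
  have [r rA hr] := argmin_seq (fun r => abs (r - w)) An.
  exists r; split; first exact: Ag hA hA1 rA.
  move=> r' g'; apply: hr; exact: goodA hA hA1 g'.
have G_ex : exists r, Good N.+1 r.
  have [r [g _]] := St_ex N.+1 0 (ltnSn N); by exists r.
pose nx n w := epsilon (inhabits 0) (St n w).
pose z0 := epsilon (inhabits 0) (Good N.+1).
pose zs := fix zs (k : nat) : K := if k is k'.+1 then nx (N.+2 + k')%N (zs k') else z0.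
have zsS k : zs k.+1 = nx (N.+2 + k)%N (zs k) by [].
have stS k : St (N.+2 + k)%N (zs k) (zs k.+1).
  rewrite zsS; apply: epsilon_spec; apply: St_ex; by rewrite !addSn ltnS leqW // leq_addr.
have gd k : Good (N.+1 + k)%N (zs k).
  case: k => [|k]; first by rewrite addn0; apply: epsilon_spec.
  by rewrite addnS -addSn; case: (stS k).
have dist k : abs (zs k.+1 - zs k) ^+ N <= abs (b (N.+1 + k)%N).
  have hNk : (N < N.+2 + k)%N by rewrite !addSn ltnS leqW // leq_addr.
  have [A [sA hA1 hA]] := PL (N.+2 + k)%N hNk.
  case: (gd k) => hw ew; case: (stS k) => _ hmin.
  apply: (@le_trans _ _ (abs (P (N.+2 + k)%N).[zs k])).
    rewrite hA // -sA -prod_const big_seq [X in _ <= X]big_seq; apply: ler_prod => r rA; rewrite abs_ge0 /=.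
    rewrite -[abs (zs k - r)]absN opprB; apply: hmin; exact: Ag hA hA1 rA.
  rewrite Pev addSn (big_ord_recr (N.+1 + k)) /= -Pev ew add0r absM absX.
  by apply: ler_piMr => //; apply: exprn_ile1; case: (gd k).
have cauchy : forall eps, 0 < eps -> exists K0, forall m n, (K0 <= m)%N -> (K0 <= n)%N ->
    abs (zs m - zs n) < eps.
  move=> eps ep; have [K1 hK1] := h4 _ (exprn_gt0 N ep).
  have step k : (K1 <= k)%N -> abs (zs k.+1 - zs k) < eps.
    move=> kk; rewrite -(ltr_pXn2r N0) ?nnegrE ?abs_ge0 ?ltW //.
    apply: le_lt_trans (dist k) _; apply: hK1; apply: leq_trans kk _.
    by rewrite addSn leqW // leq_addl.
  exists K1 => m n hm hn.
  have -> : zs m - zs n = (zs m - zs K1) - (zs n - zs K1) by rewrite opprB addrA subrK.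
  by apply: absBL; apply: tele.
have [l hl] := complete cauchy.
have l1 : abs l <= 1.
  have [N1 hN1] := hl _ ltr01.
  have -> : l = zs N1 - (zs N1 - l) by rewrite opprB addrC subrK.
  apply: absBM; first by case: (gd N1).
  exact: ltW (hN1 _ (leqnn _)).
exists l; split => //; apply: abs_small => eps ep.
have e2p : 0 < eps / 2%:R by rewrite divr_gt0 ?ltr0Sn.
have e2l : eps / 2%:R < eps by rewrite ltr_pdivrMr ?ltr0Sn // ltr_pMr // ltr1n.
have [Ka ha] := hl _ ep; have [Kb hb'] := h4 _ e2p.
pose n := maxn Ka Kb; pose m := (N.+1 + n)%N.
have hs := series_D h4 l1.
have -> : pseval abs b l = (pseval abs b l - \sum_(i < m) b i * l ^+ i) +
   (\sum_(i < m) b i * l ^+ i - \sum_(i < m) b i * zs n ^+ i).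
  rewrite -[\sum_(i < m) b i * zs n ^+ i]Pev; have := gd n; rewrite -/m; case=> _ ->.
  by rewrite subr0 subrK.
apply: absDL.
  apply: le_lt_trans e2l; apply: (series_tail hs); first exact: ltW.
  move=> i mi; rewrite absM absX; apply: le_trans (ltW (hb' i _)).
    by apply: ler_piMr => //; apply: exprn_ile1.
  apply: leq_trans mi; apply: leq_trans (leq_maxr Ka Kb) _; by rewrite leq_addl.
rewrite -sumrB; apply: (@le_lt_trans _ _ (abs (l - zs n))).
  have hw : abs (zs n) <= 1 by case: (gd n).
  apply: abs_sum_le => // i _; rewrite -mulrBr absM.
  apply: le_trans (_ : _ <= 1 * abs (l ^+ i - zs n ^+ i)) _.
    by apply: ler_wpM2r => //; apply: b1.
  rewrite mul1r; exact: pow_lip.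
rewrite -absN opprB; apply: ha; exact: leq_maxl.
Qed.

Lemma nd_factor N : forall b, nd N b -> exists zs : seq K,
  [/\ size zs = N, (forall z, z \in zs -> abs z <= 1) &
    exists U, nd 0 U /\ forall t, abs t <= 1 ->
      pseval abs b t = (\prod_(z <- zs) (t - z)) * pseval abs U t].
Proof.
elim: N => [|N IH] b hb.
  exists [::]; split => //; exists b; split => // t _; by rewrite big_nil mul1r.
have [z [hz fz]] := nd_root hb (ltn0Sn N).
have [g [hg eg]] := nd_div hb hz fz.
have [zs [sz hzs [U [hU eU]]]] := IH g hg.
exists (z :: zs); split; first by rewrite /= sz.
  by move=> r; rewrite inE => /orP [/eqP ->|]; [exact: hz | exact: hzs].
exists U; split => // t ht; by rewrite eg // eU // big_cons mulrA.
Qed.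


Lemma prod_split (ts : seq K) t t0 :
  \prod_(y <- ts) (t - y) = (t - t0) ^+ count_mem t0 ts * \prod_(y <- ts | y != t0) (t - y).
Proof.
elim: ts => [|a ts IH]; first by rewrite !big_nil expr0 mulr1.
rewrite !big_cons /= IH; case: eqVneq => [->|ne] /=.
  by rewrite add1n exprS mulrA.
by rewrite add0n mulrCA.
Qed.

Lemma lip_mul a b a' b' e : abs a <= 1 -> abs b' <= 1 -> abs (a - a') <= e ->
  abs (b - b') <= e -> abs (a * b - a' * b') <= e.
Proof.
move=> ha hb h1 h2.
have e0 : 0 <= e by apply: le_trans h1.
have -> : a * b - a' * b' = a * (b - b') + (a - a') * b' by ring.
apply: absDM; rewrite absM.
  by apply: le_trans h2; apply: ler_piMl.
by apply: le_trans h1; apply: ler_piMr.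
Qed.

Lemma prod_le1 (ts : seq K) (P : pred K) t : (forall y, y \in ts -> abs y <= 1) ->
  abs t <= 1 -> abs (\prod_(y <- ts | P y) (t - y)) <= 1.
Proof.
move=> hts ht; rewrite abs_prod big_seq_cond; apply: prodr_ile1 => y /andP [hy _].
by rewrite abs_ge0 /= absBM // hts.
Qed.

Lemma prod_lip (ts : seq K) (P : pred K) t t0 : (forall y, y \in ts -> abs y <= 1) ->
  abs t <= 1 -> abs t0 <= 1 ->
  abs (\prod_(y <- ts | P y) (t - y) - \prod_(y <- ts | P y) (t0 - y)) <= abs (t - t0).
Proof.
move=> hts ht ht0; elim: ts hts => [|a ts IH] hts.
  by rewrite !big_nil subrr abs0 abs_ge0.
have hts' : forall y, y \in ts -> abs y <= 1 by move=> y hy; apply: hts; rewrite inE hy orbT.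
have ha : abs a <= 1 by apply: hts; rewrite mem_head.
rewrite !big_cons; case: (P a); last exact: IH.
apply: lip_mul.
- exact: absBM.
- exact: prod_le1.
- by rewrite (_ : t - a - (t0 - a) = t - t0) // ; ring.
- exact: IH.
Qed.


Lemma series_ext (u v : nat -> K) s : (forall i, u i = v i) -> series_to abs u s -> series_to abs v s.
Proof.
move=> e hs eps ep; have [N hN] := hs _ ep; exists N => n hn.
have -> : \sum_(i < n) v i = \sum_(i < n) u i by apply: eq_bigr => i _; rewrite e.
exact: hN.
Qed.

Lemma absXle u r i : abs u <= r -> abs (u ^+ i) <= r ^+ i.
Proof. by move=> hu; rewrite absX; apply: lerXn2r; rewrite ?nnegrE ?abs_ge0 ?(le_trans (abs_ge0 u) hu). Qed.

Section Main.
Variables (p : nat) (rhat : R) (x : K) (Q : nat -> K) (c : R) (lam h : K).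
Hypothesis pprime : prime p.
Hypothesis abs_p : abs (p%:R) = (p%:R)^-1.
Hypothesis hx : abs x = rhat.
Hypothesis r1 : 1 < rhat.
Hypothesis hQ : in_H abs rhat Q.
Hypothesis c1 : c < 1.
Hypothesis hc : forall i, abs (Q i) * rhat ^+ i <= c.
Hypothesis hlam : abs (lam - 1) < 1.
Hypothesis hh : abs (h - 1) <= rhat.

Definition pr : R := p%:R.
Definition ca i := Q i + (if i == p then lam / p%:R else 0) + (if i == p.+1 then 1 - lam / p%:R else 0).
Definition FF u := Plam p lam u + pseval abs Q u.
Definition MM := pr * rhat ^+ p.+1.
Definition AA := ca p.+1 * x ^+ p.+1.
Definition bw w' i := (ca i - (if i == 0%N then w' else 0)) * x ^+ i / AA.

Lemma p_gt1 : 1 < pr.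
Proof. by rewrite /pr ltr1n prime_gt1. Qed.

Lemma r0 : 0 < rhat. Proof. exact: lt_trans ltr01 r1. Qed.

Lemma c0 : 0 <= c.
Proof. have := hc 0; rewrite expr0 mulr1; exact: le_trans (abs_ge0 _). Qed.

Lemma M_gt1 : 1 < MM.
Proof.
apply: lt_le_trans p_gt1 _; rewrite /MM ler_peMr ?exprn_ege1 ?(ltW r1) //.
Qed.

Lemma r_lt_M : rhat < MM.
Proof.
apply: (@le_lt_trans _ _ (rhat ^+ p.+1)).
  by rewrite -[X in X <= _]expr1 ler_eXn2l.
by rewrite /MM ltr_pMl ?exprn_gt0 ?r0 // p_gt1.
Qed.

Lemma c_lt_M : c < MM. Proof. exact: lt_trans c1 M_gt1. Qed.

Lemma abs_lam : abs lam = 1.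
Proof.
have e : lam = 1 + (lam - 1) by rewrite addrC subrK.
by rewrite {1}e abs_strict ?abs1.
Qed.

Lemma abs_ldp : abs (lam / p%:R) = pr.
Proof. by rewrite absM abs_lam mul1r absV abs_p invrK. Qed.

Lemma abs_1ldp : abs (1 - lam / p%:R) = pr.
Proof. by rewrite addrC abs_strict absN abs_ldp // abs1 p_gt1. Qed.

Lemma Q_lt1 i : abs (Q i) < 1.
Proof.
apply: le_lt_trans c1; apply: le_trans (hc i); rewrite -[X in X <= _]mulr1.
by apply: ler_wpM2l => //; apply: exprn_ege1 (ltW r1).
Qed.

Lemma ca_p1 : abs (ca p.+1) = pr.
Proof.
rewrite /ca eqxx (gtn_eqF (ltnSn p)) addr0 addrC abs_strict ?abs_1ldp //.
apply: lt_trans (Q_lt1 _) _; exact: p_gt1.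
Qed.

Lemma absA : abs AA = MM.
Proof. by rewrite /AA absM ca_p1 absX hx. Qed.

Lemma A_neq0 : AA != 0.
Proof. apply/eqP => /abs0P; rewrite absA => e; have := M_gt1; by rewrite e ltr10. Qed.

Lemma ca_big i : (p.+1 < i)%N -> ca i = Q i.
Proof.
move=> hi; rewrite /ca (gtn_eqF hi) (gtn_eqF (ltnW hi)) !addr0 //.
Qed.

Lemma ca_le i : abs (ca i) * rhat ^+ i <= MM.
Proof.
have [hi|hi|->] := ltngtP i p.+1; last by rewrite ca_p1.
- rewrite /ca (ltn_eqF hi) addr0.
  have Qb : abs (Q i) * rhat ^+ i <= MM by apply: le_trans (hc i) (ltW c_lt_M).
  case: eqP => [ip|_]; last by rewrite addr0.
  apply: le_trans (ler_wpM2r _ (absD _ _)) _; first exact: exprn_ge0 (ltW r0).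
  rewrite maxr_pMl ?exprn_ge0 ?(ltW r0) // ge_max Qb /= abs_ldp /MM ip.
  by apply: ler_wpM2l; [exact: ltW (lt_trans ltr01 p_gt1) | rewrite ler_eXn2l].
- rewrite ca_big //; apply: le_trans (hc i) (ltW c_lt_M).
Qed.

Lemma Qser u : abs u <= rhat -> series_to abs (fun i => Q i * u ^+ i) (pseval abs Q u).
Proof.
move=> hu; have [s hs] : exists s, series_to abs (fun i => Q i * u ^+ i) s.
  apply: series_ex => eps ep; have [N hN] := hQ ep; exists N => i hi.
  apply: le_lt_trans (hN i hi); rewrite absM; apply: ler_wpM2l => //; exact: absXle.
by rewrite (pseval_eq hs).
Qed.

Lemma Fser u : abs u <= rhat -> series_to abs (fun i => ca i * u ^+ i) (FF u).
Proof.
move=> hu.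
pose v i := ((if i == p then lam / p%:R else 0) + (if i == p.+1 then 1 - lam / p%:R else 0)) * u ^+ i.
have hv : series_to abs v (Plam p lam u).
  have -> : Plam p lam u = \sum_(i < p.+2) v i.
    rewrite big_ord_recr big_ord_recr /= big1 ?add0r.
      rewrite /v eqxx (ltn_eqF (ltnSn p)) (gtn_eqF (ltnSn p)) eqxx addr0 add0r.
      by rewrite /Plam.
    move=> i _; rewrite /v (ltn_eqF (ltn_ord i)).
    by rewrite (ltn_eqF (ltnW (ltn_ord i) : (i < p.+1)%N)) addr0 mul0r.
  apply: series_fin => i hi; rewrite /v (gtn_eqF hi) (gtn_eqF (ltnW hi)) addr0 mul0r //.
rewrite /FF addrC; apply: (series_ext _ (series_add (Qser hu) hv)) => i.
by rewrite /v /ca -addrA [RHS]mulrDl.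
Qed.

Lemma img1 u : abs u <= rhat -> abs (FF u - ca 0) <= MM.
Proof.
move=> hu; have := @series_tail _ _ 1 MM (Fser hu) (ltW (lt_trans ltr01 M_gt1)).
rewrite big_ord1 expr0 mulr1; apply => i _.
rewrite absM; apply: le_trans (ca_le i); apply: ler_wpM2l => //; exact: absXle.
Qed.

Lemma bw_abs w' i : abs (bw w' i) = abs (ca i - (if i == 0%N then w' else 0)) * rhat ^+ i / MM.
Proof. by rewrite /bw !absM absX hx absV absA. Qed.

Lemma bw_nd w' : abs (w' - ca 0) <= MM -> nd p.+1 (bw w').
Proof.
move=> hw; have Mp : 0 < MM := lt_trans ltr01 M_gt1.
split.
- by rewrite /bw subr0 mulfV ?abs1 // A_neq0.
- move=> i hi; rewrite bw_abs ler_pdivrMr // mul1r.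
  case: i hi => [|i] hi /=; first by rewrite expr0 mulr1 -absN opprB.
  by rewrite subr0 ca_le.
- exists (c / MM); split.
  + by rewrite divr_ge0 ?c0 ?ltW.
  + by rewrite ltr_pdivrMr // mul1r c_lt_M.
  + move=> i hi; rewrite bw_abs (gtn_eqF (ltn_trans (ltn0Sn p) hi)) subr0 ca_big //.
    by rewrite ler_pM2r ?invr_gt0.
- move=> eps ep; have [N hN] := hQ (mulr_gt0 ep Mp).
  exists (maxn N p.+2) => i hi.
  have hi1 : (p.+1 < i)%N by apply: leq_trans (leq_maxr N _) hi.
  rewrite bw_abs (gtn_eqF (ltn_trans (ltn0Sn p) hi1)) subr0 ca_big //.
  rewrite ltr_pdivrMr //; apply: hN; exact: leq_trans (leq_maxl _ _) hi.
Qed.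

Lemma bw_rel w' t : abs t <= 1 -> AA * pseval abs (bw w') t = FF (x * t) - w'.
Proof.
move=> ht; have hu : abs (x * t) <= rhat.
  by rewrite absM hx -[X in _ <= X]mulr1 ler_wpM2l // ltW // r0.
have hfin : series_to abs (fun i => (if i == 0%N then w' else 0) * (x * t) ^+ i) w'.
  have := @series_fin (fun i => (if i == 0%N then w' else 0) * (x * t) ^+ i) 1.
  rewrite big_ord1 /= expr0 mulr1; apply => -[|i] //= _; by rewrite mul0r.
have := series_scale (AA^-1) (series_add (Fser hu) (series_scale (-1) hfin)).
move/(series_ext (v := fun i => bw w' i * t ^+ i)) => hs.
rewrite (pseval_eq (hs _)); first by rewrite mulVKf ?A_neq0 // mulN1r.
move=> i; rewrite /bw exprMn; have := A_neq0 => hA; field => //.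
Qed.


Lemma x_neq0 : x != 0.
Proof. apply/eqP => x0; move: hx; rewrite x0 abs0 => e; move: r0; by rewrite -e ltxx. Qed.

Definition phi t := x * t - h + 1.
Definition psi z := (z + h - 1) / x.

Lemma psi_phi t : psi (phi t) = t.
Proof. rewrite /psi /phi; have := x_neq0 => hx0; field => //. Qed.

Lemma phi_psi z : phi (psi z) = z.
Proof. rewrite /psi /phi; have := x_neq0 => hx0; field => //. Qed.

Lemma psi_abs z : abs z <= rhat -> abs (psi z) <= 1.
Proof.
move=> hz; rewrite /psi absM absV hx ler_pdivrMr ?r0 // mul1r -addrA.
by apply: absDM.
Qed.

Lemma phi_abs t : abs t <= 1 -> abs (phi t) <= rhat.
Proof.
move=> ht; rewrite /phi (_ : x * t - h + 1 = x * t - (h - 1)); last by ring.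
apply: absBM => //.
by rewrite absM hx -[X in _ <= X]mulr1 ler_wpM2l // ltW // r0.
Qed.

Lemma psiB z z0 : psi z - psi z0 = (z - z0) / x.
Proof. rewrite /psi; have := x_neq0 => hx0; field => //. Qed.

Lemma key w z U ts : abs z <= rhat ->
  (forall t, abs t <= 1 -> pseval abs (bw (w + h - 1)) t =
      (\prod_(y <- ts) (t - y)) * pseval abs U t) ->
  Qlam abs p Q lam h z - w = AA * ((\prod_(y <- ts) (psi z - y)) * pseval abs U (psi z)).
Proof.
move=> hz eU; rewrite -eU ?psi_abs // bw_rel ?psi_abs //.
have -> : x * psi z = z + h - 1 by rewrite /psi mulrC divfK ?x_neq0.
by rewrite /Qlam /FF; ring.
Qed.

Lemma img_iff y : (exists z, abs z <= rhat /\ Qlam abs p Q lam h z = y) <->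
  abs (y - (ca 0 + 1 - h)) <= MM.
Proof.
split.
  move=> [z [hz <-]]; rewrite /Qlam.
  have -> : Plam p lam (z + h - 1) + pseval abs Q (z + h - 1) + 1 - h - (ca 0 + 1 - h)
    = FF (z + h - 1) - ca 0 by rewrite /FF; ring.
  apply: img1; rewrite -addrA; exact: absDM.
move=> hy; have hw : abs ((y + h - 1) - ca 0) <= MM.
  by rewrite (_ : y + h - 1 - ca 0 = y - (ca 0 + 1 - h)) //; ring.
have [ts [sts hts [U [hU eU]]]] := nd_factor (bw_nd hw).
case: ts sts hts eU => [//|t0 ts] _ hts eU.
have ht0 : abs t0 <= 1 by apply: hts; rewrite mem_head.
exists (phi t0); split; first exact: phi_abs.
apply/eqP; rewrite -subr_eq0; apply/eqP.
rewrite (key (phi_abs ht0) eU) psi_phi big_cons subrr !mul0r mulr0 //.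
Qed.

Lemma iterop_add1 n : iterop n addn 1%N 0%N = n.
Proof. case: n => // n; elim: n => // n IH; move: IH; rewrite /= => ->; by rewrite add1n. Qed.

Lemma count_part w : (exists z, abs z <= rhat /\ Qlam abs p Q lam h z = w) ->
  exists s : seq K, uniq s /\
    (forall z, (abs z <= rhat /\ Qlam abs p Q lam h z = w) <-> z \in s) /\
    exists m : K -> nat,
      (forall z, z \in s -> mult_at abs (fun x => Qlam abs p Q lam h x - w) z (m z)) /\
      (\sum_(z <- s) m z)%N = p.+1.
Proof.
move=> /img_iff hy; have hw : abs ((w + h - 1) - ca 0) <= MM.
  by rewrite (_ : w + h - 1 - ca 0 = w - (ca 0 + 1 - h)) //; ring.
have [ts [sts hts [U [hU eU]]]] := nd_factor (bw_nd hw).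
pose V := pseval abs U.
have hV1 t : abs t <= 1 -> abs (V t) = 1 by move=> ht; exact: nd0_abs.
have hVn t : abs t <= 1 -> V t != 0.
  by move=> ht; apply/eqP => /abs0P; rewrite hV1 // => /eqP; rewrite oner_eq0.
have hVl t t' : abs t <= 1 -> abs t' <= 1 -> abs (V t - V t') <= abs (t - t').
  by move=> ht ht'; apply: ev_lip => //; [exact: nd_le1 hU | case: hU].
have hk z : abs z <= rhat -> Qlam abs p Q lam h z - w =
    AA * ((\prod_(y <- ts) (psi z - y)) * V (psi z)) by move=> hz; exact: key.
pose zsz := map phi ts.
have phi_inj : injective phi by move=> a b e; rewrite -(psi_phi a) e psi_phi.
have memP z : (abs z <= rhat /\ Qlam abs p Q lam h z = w) <-> z \in zsz.
  split.
    move=> [hz ez]; have := hk _ hz; rewrite ez subrr => /esym/eqP.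
    rewrite mulf_eq0 (negPf A_neq0) /= mulf_eq0 (negPf (hVn _ (psi_abs hz))) orbF.
    rewrite prodf_seq_eq0 => /hasP [t tts /=]; rewrite subr_eq0 => /eqP e.
    by rewrite -(phi_psi z) e; apply: map_f.
  move=> /mapP [t tts ->]; have ht : abs t <= 1 by apply: hts.
  split; first exact: phi_abs.
  apply/eqP; rewrite -subr_eq0; apply/eqP.
  by rewrite hk ?phi_abs // psi_phi (big_rem t) //= subrr !mul0r mulr0.
exists (undup zsz); split; first exact: undup_uniq.
split; first by move=> z; rewrite mem_undup.
exists (fun z => count_mem z zsz); split; last first.
  have := big_undup_iterop_count addn zsz xpredT (fun _ => 1%N).
  under eq_bigr do rewrite iterop_add1.
  by move=> ->; rewrite sum1_size size_map sts.
move=> z0; rewrite mem_undup => z0s.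
have [hz0 _] := (proj2 (memP z0) z0s).
case/mapP: z0s => t0 t0s ez0.
have ht0 : abs t0 <= 1 by apply: hts.
have cnt : count_mem z0 zsz = count_mem t0 ts.
  rewrite ez0 count_map; apply: eq_count => y /=.
  by apply/eqP/eqP => [/phi_inj|->].
rewrite cnt; set k := count_mem t0 ts.
pose Ht t := (\prod_(y <- ts | y != t0) (t - y)) * V t.
pose C := AA / x ^+ k.
have Cn : C != 0 by rewrite mulf_neq0 ?invr_eq0 ?expf_neq0 ?A_neq0 ?x_neq0.
have Htn : Ht t0 != 0.
  rewrite mulf_neq0 ?hVn //; apply/negP; rewrite prodf_seq_eq0 => /hasP [y _ /=].
  by rewrite subr_eq0 eq_sym => /andP [/negPf ->].
exists (C * Ht t0); split; first by rewrite mulf_neq0.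
move=> eps ep; have Kp : 0 < abs C + 1 by apply: ltr_wpDl.
exists (Num.min rhat (eps / (abs C + 1))); split.
  by rewrite lt_min r0 divr_gt0.
move=> z nz; rewrite lt_min => /andP [dz1 dz2].
have hz : abs z <= rhat.
  rewrite -(subrK z0 z); apply: absDM => //; exact: ltW.
set t := psi z.
have ht : abs t <= 1 by apply: psi_abs.
have et0 : psi z0 = t0 by rewrite ez0 psi_phi.
have dt : t - t0 = (z - z0) / x by rewrite -et0 psiB.
have tn : t - t0 != 0.
  by rewrite dt mulf_neq0 ?invr_eq0 ?x_neq0 // subr_eq0.
have ez : z - z0 = x * (t - t0) by rewrite dt mulrC divfK ?x_neq0.
rewrite (hk _ hz) -/t (prod_split _ _ t0) -/k ez exprMn.
have -> : AA * ((t - t0) ^+ k * \prod_(y <- ts | y != t0) (t - y) * V t) /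
    (x ^+ k * (t - t0) ^+ k) = C * Ht t.
  rewrite /C /Ht; have := x_neq0 => hx0; have := tn => tn'.
  field; by rewrite ?expf_neq0 ?x_neq0.
rewrite -mulrBr absM.
have hl : abs (Ht t - Ht t0) <= abs (t - t0).
  apply: lip_mul.
  - exact: prod_le1.
  - by rewrite hV1.
  - exact: prod_lip.
  - exact: hVl.
have htz : abs (t - t0) <= abs (z - z0).
  rewrite dt absM absV hx ler_pdivrMr ?r0 //; apply: ler_peMr => //; exact: ltW.
apply: (@le_lt_trans _ _ ((abs C + 1) * abs (z - z0))).
  apply: le_trans (_ : abs C * abs (z - z0) <= _).
    by apply: ler_wpM2l => //; apply: le_trans hl htz.
  by apply: ler_wpM2r => //; rewrite lerDl.
by rewrite mulrC -ltr_pdivlMr.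
Qed.


Lemma image_part : exists (c0 : K) (r : R),
  ((forall y, (exists z, abs z <= rhat /\ Qlam abs p Q lam h z = y) <-> abs (y - c0) <= r)
   \/ (forall y, (exists z, abs z <= rhat /\ Qlam abs p Q lam h z = y) <-> abs (y - c0) < r))
  /\ (forall z, abs z <= rhat -> exists z', abs z' <= rhat /\ Qlam abs p Q lam h z' = z)
  /\ (exists y, (exists z, abs z <= rhat /\ Qlam abs p Q lam h z = y) /\ rhat < abs y).
Proof.
have ca0 : ca 0 = Q 0.
  have p0 : (0 == p) = false by rewrite eq_sym gtn_eqF // prime_gt0.
  by rewrite /ca p0 addr0 addr0.
have hc0 : abs (ca 0 + 1 - h) <= rhat.
  rewrite (_ : ca 0 + 1 - h = ca 0 - (h - 1)); last by ring.
  apply: absBM => //; rewrite ca0; apply: ltW; apply: lt_trans (Q_lt1 0) r1.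
exists (ca 0 + 1 - h), MM; split; first by left; exact: img_iff.
split.
  move=> z hz; apply/img_iff; apply: le_trans (ltW r_lt_M); exact: absBM.
exists (ca 0 + 1 - h + AA); split.
  by apply/img_iff; rewrite addrAC subrr add0r absA.
by rewrite addrC abs_strict absA ?r_lt_M //; apply: le_lt_trans hc0 _; rewrite -absA absA r_lt_M.
Qed.

End Main.

End Ultra.


Theorem proposition3p6 (R : realType) (K : closedFieldType) (abs : K -> R)
  (p : nat) (rhat : R) (Q : nat -> K) :
  prime p ->
  is_Cp abs p ->
  (exists x : K, x != 0 /\ abs x = rhat) -> 1 < rhat ->
  in_H abs rhat Q ->
  (exists c : R, c < rho R p /\ forall i, abs (Q i) * rhat ^+ i <= c) ->
  forall lam h : K,
    abs (lam - 1) < 1 ->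
    abs (h - 1) <= abs (pseval abs Q 1) / p%:R ->
    Qstar abs p Q lam h = h ->
    (* Q_lambda(B) is a ball strictly containing B *)
    (exists (c : K) (r : R),
       ((forall y, (exists z, abs z <= rhat /\ Qlam abs p Q lam h z = y) <-> abs (y - c) <= r)
        \/ (forall y, (exists z, abs z <= rhat /\ Qlam abs p Q lam h z = y) <-> abs (y - c) < r))
       /\ (forall z, abs z <= rhat -> exists z', abs z' <= rhat /\ Qlam abs p Q lam h z' = z)
       /\ (exists y, (exists z, abs z <= rhat /\ Qlam abs p Q lam h z = y) /\ rhat < abs y))
    /\
    (* every w in Q_lambda(B) has exactly p+1 preimages in B, with multiplicity *)
    (forall w, (exists z, abs z <= rhat /\ Qlam abs p Q lam h z = w) ->
       exists s : seq K, uniq s /\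
         (forall z, (abs z <= rhat /\ Qlam abs p Q lam h z = w) <-> z \in s) /\
         exists m : K -> nat,
           (forall z, z \in s -> mult_at abs (fun x => Qlam abs p Q lam h x - w) z (m z)) /\
           (\sum_(z <- s) m z)%N = p.+1).
Proof.
move=> pp [ge0 [a0P [aM [aD [ap [comp _]]]]]] [x [xn hx]] r1 hQ [c [crho hc]] lam h hlam hh _.
have c0 : 0 <= c by have := hc 0; rewrite expr0 mulr1; exact: le_trans (ge0 _).
have pge1 : (1 : R) <= p%:R by rewrite ler1n prime_gt0.
have rho1 : rho R p <= 1.
  have e : (p%:R : R) `^ 0 = 1 by rewrite powRr0.
  rewrite -e /rho; apply: (ler_powR pge1).
  by rewrite oppr_le0 invr_ge0 subr_ge0.
have c1 : c < 1 by apply: lt_le_trans crho rho1.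
have r0 : 0 <= rhat by apply: ltW; apply: lt_trans ltr01 r1.
have hQ1 : abs (pseval abs Q 1) <= c.
  apply: (series_bound ge0 a0P aM aD (Qser ge0 a0P aM aD comp hQ (u := 1) _) c0).
    by rewrite (abs1 ge0 a0P aM) ltW.
  move=> i; rewrite expr1n mulr1; apply: le_trans (hc i).
  by rewrite -[X in X <= _]mulr1 ler_wpM2l // exprn_ege1 // ltW.
have hh' : abs (h - 1) <= rhat.
  apply: le_trans hh _; apply: le_trans (ltW r1); apply: le_trans (ltW c1).
  apply: le_trans hQ1; rewrite ler_pdivrMr ?(lt_le_trans ltr01 pge1) //.
  by rewrite ler_peMr // ge0.
split.
  exact: (image_part ge0 a0P aM aD comp pp ap hx r1 hQ c1 hc hlam hh').
move=> w hw; exact: (count_part ge0 a0P aM aD comp pp ap hx r1 hQ c1 hc hlam hh' hw).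
Qed.
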